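(* Let $I,J\subseteq\mathbb{R}$ be (possibly unbounded) intervals and let $f:I\times J\to\mathbb{R}$ be such that $\int f\,d\alpha=\int f\,d\beta$ whenever $\alpha$ and $\beta$ are competitors concentrated on $I\times J$. Then $f$ admits a representation $f(x,y)=\phi(x)+\psi(y)+k(x)y$ for some functions $\phi,k$ on $I$ and $\psi$ on $J$.
   Context: For a finite measure $\alpha$ on $\mathbb{R}^2$ write $\alpha_0,\alpha_1$ for its marginals and $(\alpha_x)_x$ for a disintegration with respect to $\alpha_0$. Two finite measures $\alpha,\beta$ on $\mathbb{R}^2$ are competitors if they have the same first and second marginals and for $\alpha_0$-a.e. $x$, $\int y\,\alpha_x(dy)=\int y\,\beta_x(dy)$. *)

(* Defs.v *)
From HB Require Import structures.
From mathcomp Require Import all_boot all_order all_algebra.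
From mathcomp Require Import all_classical all_reals all_analysis.
From mathcomp Require Import measurable_realfun lebesgue_measure lebesgue_integral.
Set Implicit Arguments. Unset Strict Implicit. Unset Printing Implicit Defensive.
Import Order.TTheory GRing.Theory Num.Theory.
Local Open Scope classical_set_scope.
Local Open Scope ring_scope.
Local Open Scope ereal_scope.

Section competitors.
Variable R : realType.

Definition marg1 (a : set (R * R)%type -> \bar R) : set R -> \bar R :=
  pushforward a fst.
Definition marg2 (a : set (R * R)%type -> \bar R) : set R -> \bar R :=
  pushforward a snd.

Definition is_disintegration (a : set (R * R)%type -> \bar R)
    (k : R -> {measure set R -> \bar R}) : Prop :=
  (forall B : set R, measurable B -> measurable_fun [set: R] (k ^~ B)) /\
  (forall A B : set R, measurable A -> measurable B ->
     a (A `*` B) = \int[marg1 a]_(x in A) k x B).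

Definition bary (m : set R -> \bar R) : \bar R := \int[m]_y y%:E.

Definition competitors (a b : set (R * R)%type -> \bar R) : Prop :=
  (forall A : set R, measurable A -> marg1 a A = marg1 b A) /\
  (forall A : set R, measurable A -> marg2 a A = marg2 b A) /\
  exists ka kb : R -> {measure set R -> \bar R},
    is_disintegration a ka /\ is_disintegration b kb /\
    {ae marg1 a, forall x, bary (ka x) = bary (kb x)}.

Definition concentrated (a : set (R * R)%type -> \bar R) (I J : interval R) : Prop :=
  a (~` [set z | z.1 \in I /\ z.2 \in J]) = 0.

End competitors.

(* Main.v *)
Require Import Defs.
From HB Require Import structures.
From mathcomp Require Import all_boot all_order all_algebra.
From mathcomp Require Import all_classical all_reals all_analysis.
From mathcomp Require Import measurable_realfun lebesgue_measure lebesgue_integral.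
From mathcomp Require Import ring lra.
Import Order.TTheory GRing.Theory Num.Theory.
Local Open Scope classical_set_scope.
Local Open Scope ring_scope.


Section L0.
Local Open Scope ereal_scope.
Context d (T : measurableType d) (R : realType).
Variables (mu : {measure set T -> \bar R}) (S : set T) (mS : measurable S).
Hypothesis muS : mu (~` S) = 0.
Import HBNNSimple.

Lemma L0s (h : {nnsfun T >-> R}) :
  sintegral mu (proj_nnsfun h mS) = sintegral mu h.
Proof.
rewrite -!integralT_nnsfun.
have -> : \int[mu]_x ((proj_nnsfun h mS) x)%:E = \int[mu]_(x in S) (h x)%:E.
  rewrite [RHS]integral_mkcond; apply: eq_integral => x _ /=.
  rewrite /patch /= /mindic indicE; case: ifPn => xS; first by rewrite mulr1.
  by rewrite mulr0.
have -> : [set: T] = S `|` ~` S by rewrite setUv.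
rewrite ge0_integral_setU //.
- rewrite (@null_set_integral _ _ _ mu (~` S)) ?adde0 //.
  + exact: measurableC.
  + by apply: measurable_funTS; apply: measurableT_comp.
- exact: measurableC.
- by apply: measurable_funTS; apply: measurableT_comp.
- by move=> x _; rewrite lee_fin.
- by rewrite disj_set2E setICr.
Qed.

Lemma L0p (g : T -> \bar R) : (forall x, 0 <= g x) ->
  \int[mu]_x g x = \int[mu]_(x in S) g x.
Proof.
move=> g0; rewrite !ge0_integralE// patch_setT.
apply/eqP; rewrite eq_le; apply/andP; split.
- apply: ge_ereal_sup => _ [h hg <-]; apply: ereal_sup_ubound => /=.
  exists (proj_nnsfun h mS); last exact: L0s.
  move=> x /=; rewrite /patch /mindic indicE; case: ifPn => xS.
    by rewrite mulr1.
  by rewrite mulr0.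
- apply: le_ereal_sup => _ [h hg <-]; exists h => // x.
  apply: le_trans (hg x) _; rewrite /patch; case: ifPn => //.
Qed.

Lemma L0 (F : T -> \bar R) : \int[mu]_x F x = \int[mu]_(x in S) F x.
Proof.
rewrite integralE [RHS]integralE; congr (_ - _); apply: L0p => x.
- exact: funepos_ge0.
- exact: funeneg_ge0.
Qed.
End L0.


Lemma in1N {T : Type} {a b : T} : a <> b -> (a \in [set b]) = false.
Proof. by move=> ab; apply: memNset. Qed.
Lemma in1 {T : Type} (a : T) : (a \in [set a]) = true.
Proof. by apply: mem_set. Qed.

Section wd3.
Local Open Scope ereal_scope.
Context d (T : measurableType d) (R : realType).
Variables (c1 c2 c3 : {nonneg R}) (p1 p2 p3 : T).

Definition wd3 : set T -> \bar R :=
  measure_add (measure_add (mscale c1 \d_p1) (mscale c2 \d_p2)) (mscale c3 \d_p3).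

HB.instance Definition _ := Measure.copy wd3
  (measure_add (measure_add (mscale c1 \d_p1) (mscale c2 \d_p2)) (mscale c3 \d_p3)).

Lemma wd3E A : wd3 A = (c1%:num * (p1 \in A)%:R + c2%:num * (p2 \in A)%:R
   + c3%:num * (p3 \in A)%:R)%:E.
Proof. rewrite /wd3 measure_addE /=. by rewrite /msum !big_ord_recl big_ord0 /= /mscale /dirac /= /indic adde0 -!EFinM -!EFinD !indicE. Qed.

Lemma wd3_fin : fin_num_fun wd3.
Proof. by move=> A _; rewrite wd3E. Qed.

HB.instance Definition _ := Measure_isFinite.Build _ _ _ wd3 wd3_fin.


Hypothesis ms : forall p : T, measurable [set p].
Hypotheses (n12 : p1 <> p2) (n13 : p1 <> p3) (n23 : p2 <> p3).

Lemma wd3_int_ge0 (g : T -> R) : (forall x, (0 <= g x)%R) ->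
  \int[wd3]_x (g x)%:E = (c1%:num * g p1 + c2%:num * g p2 + c3%:num * g p3)%:E.
Proof.
move=> g0.
set S := [set p1] `|` [set p2] `|` [set p3].
have mS : measurable S by apply: measurableU; [apply: measurableU|]; exact: ms.
have nS : wd3 (~` S) = 0.
  rewrite wd3E !memNset ?mulr0 ?addr0 //= /S.
  - by apply; right.
  - by apply; left; right.
  - by apply; left; left.
pose G x := (g p1 * \1_[set p1] x + g p2 * \1_[set p2] x + g p3 * \1_[set p3] x)%R.
have G1 : G p1 = g p1.
  by rewrite /G !indicE in1 (in1N n12) (in1N n13) /= mulr1 !mulr0 !addr0.
have G2 : G p2 = g p2.
  by rewrite /G !indicE in1 (in1N (nesym n12)) (in1N n23) /= mulr1 !mulr0 add0r addr0.
have G3 : G p3 = g p3.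
  by rewrite /G !indicE in1 (in1N (nesym n13)) (in1N (nesym n23)) /= mulr1 !mulr0 !add0r.
have GS : {in S, (fun x => (g x)%:E) =1 (fun x => (G x)%:E)}.
  move=> x; rewrite inE /S => -[[]|] ->; by rewrite ?G1 ?G2 ?G3.
rewrite (@L0 _ _ _ _ _ mS nS) (@eq_integral _ _ _ _ _ _ _ GS) -(@L0 _ _ _ _ _ mS nS).
have G0 x : (0 <= G x)%R by rewrite /G !addr_ge0// mulr_ge0.
have mG : measurable_fun setT (fun x => (G x)%:E).
  apply: measurableT_comp => //; rewrite /G.
  by repeat apply: measurable_funD; apply: measurable_funM => //; exact: measurable_indic.
rewrite /wd3 ge0_integral_measure_add//; last by move=> x _; rewrite lee_fin.
rewrite ge0_integral_measure_add//; last by move=> x _; rewrite lee_fin.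
rewrite !ge0_integral_mscale//; try by move=> x _; rewrite lee_fin.
rewrite !integral_dirac// !diracE !mem_set// !mul1e G1 G2 G3.
by rewrite -!EFinM -!EFinD.
Qed.

Lemma wd3_int (f : T -> R) :
  \int[wd3]_x (f x)%:E = (c1%:num * f p1 + c2%:num * f p2 + c3%:num * f p3)%:E.
Proof.
rewrite integralE.
have -> : (fun x => (f x)%:E)^\+ = (fun x => (Num.max (f x) 0%R)%:E).
  by apply/funext => x; rewrite funeposE EFin_max.
have -> : (fun x => (f x)%:E)^\- = (fun x => (Num.max (- f x) 0%R)%:E).
  by apply/funext => x; rewrite funenegE EFin_max.
rewrite !wd3_int_ge0; try by move=> x; rewrite le_max lexx orbT.
rewrite -EFinB; congr EFin.
have mm (a : R) : (Num.max a 0 - Num.max (- a) 0 = a)%R.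
  rewrite !maxEle; case: ifPn => h1; case: ifPn => h2;
    rewrite -?ltNge in h1 h2; lra.
have := mm (f p1); have := mm (f p2); have := mm (f p3).
move: (Num.max (f p1) 0)%R (Num.max (- f p1) 0)%R (Num.max (f p2) 0)%R
  (Num.max (- f p2) 0)%R (Num.max (f p3) 0)%R (Num.max (- f p3) 0)%R.
move=> u1 v1 u2 v2 u3 v3 e3 e2 e1; rewrite -e1 -e2 -e3; ring.
Qed.

End wd3.
Arguments wd3 {d T R}.



Section eqmi.
Local Open Scope ereal_scope.
Context d (T : measurableType d) (R : realType) (D : set T).
Import HBNNSimple.

Let eqmi0 (m2 m1 : set T -> \bar R) (f : T -> \bar R) :
  (forall A, measurable A -> A `<=` D -> m1 A = m2 A) ->
  [set sintegral m1 h | h in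
    [set h : {nnsfun T >-> R} | (forall x, (h x)%:E <= (f \_ D) x)]] `<=`
  [set sintegral m2 h | h in
    [set h : {nnsfun T >-> R} | (forall x, (h x)%:E <= (f \_ D) x)]].
Proof.
move=> m12 _ [h hfD <-] /=; exists h => //; apply: eq_fsbigr => r _.
have [hrD|hrD] := pselect (h @^-1` [set r] `<=` D); first by rewrite m12.
suff : r = 0%R by move=> ->; rewrite !mul0e.
apply: contra_notP hrD => /eqP r0 t/= htr.
have := hfD t.
rewrite /patch/=; case: ifPn; first by rewrite inE.
move=> tD.
move: r0; rewrite -htr => ht0.
by rewrite le_eqVlt eqe (negbTE ht0)/= lte_fin// ltNge// fun_ge0.
Qed.

Lemma eqmi (m2 m1 : set T -> \bar R) (f : T -> \bar R) :
    (forall A, measurable A -> A `<=` D -> m1 A = m2 A) ->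
  \int[m1]_(x in D) f x = \int[m2]_(x in D) f x.
Proof.
move=> m12; rewrite /integral funepos_restrict funeneg_restrict.
have m21 : forall A, measurable A -> A `<=` D -> m2 A = m1 A.
  by move=> A mA AD; rewrite m12.
by congr (ereal_sup _ - ereal_sup _); rewrite eqEsubset; split;
  apply: eqmi0.
Qed.
End eqmi.

Lemma notinC {T : Type} (A : set T) u : A u -> (u \in ~` A) = false.
Proof. by move=> Au; apply: memNset => /(_ Au). Qed.

Lemma in_pre1 {T1 T2 : Type} (A : set T1) (u : T1) (v : T2) :
  ((u, v) \in fst @^-1` A) = (u \in A).
Proof. by apply/idP/idP => /set_mem /= h; exact: mem_set. Qed.

Lemma in_pre2 {T1 T2 : Type} (A : set T2) (u : T1) (v : T2) :
  ((u, v) \in snd @^-1` A) = (v \in A).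
Proof. by apply/idP/idP => /set_mem /= h; exact: mem_set. Qed.

Lemma in_X {T1 T2 : Type} (A : set T1) (B : set T2) (u : T1) (v : T2) :
  ((u, v) \in A `*` B) = (u \in A) && (v \in B).
Proof.
apply/idP/andP => [/set_mem [/= h1 h2]|[/set_mem h1 /set_mem h2]].
  by split; exact: mem_set.
by apply: mem_set; split.
Qed.

Lemma natr_and (R : pzSemiRingType) (b1 b2 : bool) :
  ((b1 && b2)%:R = b1%:R * b2%:R :> R).
Proof. by case: b1; case: b2; rewrite ?mulr1 ?mulr0 ?mul0r. Qed.

Lemma ms2 (R : realType) (p : (R * R)%type) : measurable [set p].
Proof.
case: p => u v.
rewrite (_ : [set (u, v)] = [set u] `*` [set v]).
  by apply: measurableX; exact: measurable_set1.
by apply/seteqP; split => [[a b] /= [-> ->]//|[a b] /= [-> ->]].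
Qed.

Lemma ms1 (R : realType) (p : R) : measurable [set p].
Proof. exact: measurable_set1. Qed.

Lemma pneq1 {T1 T2 : Type} (a a' : T1) (b b' : T2) : a <> a' -> (a, b) <> (a', b').
Proof. by move=> h [e _]; exact: h e. Qed.
Lemma pneq2 {T1 T2 : Type} (a a' : T1) (b b' : T2) : b <> b' -> (a, b) <> (a', b').
Proof. by move=> h [_ e]; exact: h e. Qed.

Lemma in_XR (R : pzSemiRingType) {T1 T2 : Type} (A : set T1) (B : set T2) (u : T1) (v : T2) :
  ((u, v) \in A `*` B)%:R = (u \in A)%:R * (v \in B)%:R :> R.
Proof. by rewrite in_X natr_and. Qed.


Lemma three_point (R : realType) (I J : interval R) (f : R -> R -> R) :
  (forall a b : {finite_measure set (R * R)%type -> \bar R},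
      concentrated a I J -> concentrated b I J -> competitors a b ->
      (\int[a]_z (f z.1 z.2)%:E = \int[b]_z (f z.1 z.2)%:E)%E) ->
  forall x x' y1 y2 y3 : R, x \in I -> x' \in I -> x <> x' ->
  y1 \in J -> y2 \in J -> y3 \in J -> y1 < y2 -> y2 < y3 ->
  (y3 - y1) * (f x y2 - f x' y2) =
    (y3 - y2) * (f x y1 - f x' y1) + (y2 - y1) * (f x y3 - f x' y3).
Proof.
move=> H x x' y1 y2 y3 xI x'I xx' y1J y2J y3J h12 h23.
have y31 : y3 - y1 != 0 by rewrite subr_eq0 gt_eqF // (lt_trans h12 h23).
pose t := (y3 - y2) / (y3 - y1).
have t0 : 0 <= t by rewrite divr_ge0 // subr_ge0 ltW // (lt_trans h12 h23).
have t1e : 1 - t = (y2 - y1) / (y3 - y1) by rewrite /t; field.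
have t1 : 0 <= 1 - t by rewrite t1e divr_ge0 // subr_ge0 ltW // (lt_trans h12 h23).
have ty : t * y1 + (1 - t) * y3 = y2 by rewrite t1e /t; field.
have ty' : t * (y3 - y1) = y3 - y2 by rewrite /t; field.
have ty'' : (1 - t) * (y3 - y1) = y2 - y1 by rewrite t1e; field.
pose tn := NngNum t0; pose sn := NngNum t1.
have o0 : (0:R) <= 1 by [].
have z0 : (0:R) <= 0 by [].
pose on := NngNum o0; pose zn := NngNum z0.
have tnE : tn%:num = t by [].
have snE : sn%:num = 1 - t by [].
have onE : on%:num = 1 by [].
have znE : zn%:num = 0 by [].
have n13 : y1 <> y3 by move=> e; move: h12 h23; rewrite e; lra.
have n12 : y1 <> y2 by move=> e; move: h12; rewrite e; lra.
have n32 : y3 <> y2 by move=> e; move: h23; rewrite e; lra.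
pose a : {finite_measure set (R * R)%type -> \bar R} :=
  wd3 tn sn on (x, y1) (x, y3) (x', y2).
pose b : {finite_measure set (R * R)%type -> \bar R} :=
  wd3 on tn sn (x, y2) (x', y1) (x', y3).
have := H a b.
rewrite /a /b !wd3_int //.
2-9: by [apply: ms2 | apply: pneq1 | apply: pneq2].
have ca : concentrated (wd3 tn sn on (x, y1) (x, y3) (x', y2)) I J.
  by rewrite /concentrated wd3E !notinC ?mulr0 ?addr0 //=.
have cb : concentrated (wd3 on tn sn (x, y2) (x', y1) (x', y3)) I J.
  by rewrite /concentrated wd3E !notinC ?mulr0 ?addr0 //=.
have cp : competitors (wd3 tn sn on (x, y1) (x, y3) (x', y2))
     (wd3 on tn sn (x, y2) (x', y1) (x', y3)).
  split; [|split].
  - by move=> A mA; rewrite /marg1 /pushforward !wd3E !in_pre1 /=; congr EFin; ring.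
  - by move=> A mA; rewrite /marg2 /pushforward !wd3E !in_pre2 /=; congr EFin; ring.
  pose ka : R -> {measure set R -> \bar R} := fun z =>
    if z == x then (wd3 tn sn zn y1 y3 y2 : {measure set R -> \bar R})
    else (wd3 zn zn on y1 y3 y2 : {measure set R -> \bar R}).
  pose kb : R -> {measure set R -> \bar R} := fun z =>
    if z == x then (wd3 zn zn on y1 y3 y2 : {measure set R -> \bar R})
    else (wd3 tn sn zn y1 y3 y2 : {measure set R -> \bar R}).
  pose q := Num.max x x' + 1.
  have hx : x <= Num.max x x' by rewrite le_max lexx.
  have hx' : x' <= Num.max x x' by rewrite le_max lexx orbT.
  have qx : x <> q by apply/eqP; rewrite lt_eqF // /q; lra.
  have qx' : x' <> q by apply/eqP; rewrite lt_eqF // /q; lra.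
  have x'x : x' == x = false by apply/eqP => e; apply: xx'.
  have mk (B : set R) (m1 m2 : {measure set R -> \bar R}) :
      measurable_fun [set: R] (fun z => if z == x then m1 B else m2 B).
    apply: measurable_fun_ifT => //.
    exact: measurable_fun_eqr.
  exists ka, kb; split; [|split].
  - split.
    + move=> B mB.
      rewrite (_ : ka ^~ B = fun z => if z == x then wd3 tn sn zn y1 y3 y2 B
          else wd3 zn zn on y1 y3 y2 B); first exact: mk.
      by apply/funext => z; rewrite /ka; case: (z == x).
    + move=> A B mA mB.
      rewrite (@eqmi _ _ _ A (wd3 on on zn x x' q)); last first.
        by move=> A' mA' _; rewrite /marg1 /pushforward !wd3E !in_pre1 /=; congr EFin; ring.
      rewrite integral_mkcond.
      pose kr z := if z == x then t * (y1 \in B)%:R + (1 - t) * (y3 \in B)%:R + 0 * (y2 \in B)%:R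
        else 0 * (y1 \in B)%:R + 0 * (y3 \in B)%:R + 1 * (y2 \in B)%:R.
      rewrite (@eq_integral _ _ _ _ _ (fun z => ((z \in A)%:R * kr z)%:E)); last first.
        move=> z _; rewrite /patch; case: (z \in A); rewrite ?mul1r ?mul0r //.
        by rewrite /ka /kr; case: (z == x) => /=; rewrite wd3E.
      rewrite wd3_int //.

      have krx : kr x = t * (y1 \in B)%:R + (1 - t) * (y3 \in B)%:R + 0 * (y2 \in B)%:R.
        by rewrite /kr eqxx.
      have krx' : kr x' = 0 * (y1 \in B)%:R + 0 * (y3 \in B)%:R + 1 * (y2 \in B)%:R.
        by rewrite /kr x'x.
      rewrite wd3E !in_XR krx krx' tnE snE onE znE; congr EFin.
ring.
  - split.
    + move=> B mB.
      rewrite (_ : kb ^~ B = fun z => if z == x then wd3 zn zn on y1 y3 y2 B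
          else wd3 tn sn zn y1 y3 y2 B); first exact: mk.
      by apply/funext => z; rewrite /kb; case: (z == x).
    + move=> A B mA mB.
      rewrite (@eqmi _ _ _ A (wd3 on on zn x x' q)); last first.
        by move=> A' mA' _; rewrite /marg1 /pushforward !wd3E !in_pre1 /=; congr EFin; ring.
      rewrite integral_mkcond.
      pose kr z := if z == x then 0 * (y1 \in B)%:R + 0 * (y3 \in B)%:R + 1 * (y2 \in B)%:R
        else t * (y1 \in B)%:R + (1 - t) * (y3 \in B)%:R + 0 * (y2 \in B)%:R.
      rewrite (@eq_integral _ _ _ _ _ (fun z => ((z \in A)%:R * kr z)%:E)); last first.
        move=> z _; rewrite /patch; case: (z \in A); rewrite ?mul1r ?mul0r //.
        by rewrite /kb /kr; case: (z == x) => /=; rewrite wd3E.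
      rewrite wd3_int //.
      have krx : kr x = 0 * (y1 \in B)%:R + 0 * (y3 \in B)%:R + 1 * (y2 \in B)%:R.
        by rewrite /kr eqxx.
      have krx' : kr x' = t * (y1 \in B)%:R + (1 - t) * (y3 \in B)%:R + 0 * (y2 \in B)%:R.
        by rewrite /kr x'x.
      rewrite wd3E !in_XR krx krx' tnE snE onE znE; congr EFin; ring.
  - have Pall : forall z, bary (ka z) = bary (kb z).
      move=> z; rewrite /bary /ka /kb; case: (z == x) => /=;
        rewrite !wd3_int // tnE snE onE znE; congr EFin; lra.
    exists set0; split => //.
      by rewrite /marg1 /pushforward preimage_set0 measure0.
    by move=> z /= /(_ (Pall z)).
move=> /(_ ca cb cp) [] /=.
move=> E.
have E' : f x y2 - f x' y2 = t * (f x y1 - f x' y1) + (1 - t) * (f x y3 - f x' y3).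
  by move: E; lra.
by rewrite E' -ty' -ty''; ring.
Qed.


Theorem lemma4p4 (R : realType) (I J : interval R) (f : R -> R -> R) :
  (forall a b : {finite_measure set (R * R)%type -> \bar R},
      concentrated a I J -> concentrated b I J -> competitors a b ->
      (\int[a]_z (f z.1 z.2)%:E = \int[b]_z (f z.1 z.2)%:E)%E) ->
  exists phi k psi : R -> R,
    forall x y, x \in I -> y \in J -> f x y = phi x + psi y + k x * y.
Proof.
move=> H.
case: (pselect (exists x0, x0 \in I)) => [[x0 x0I]|noI]; last first.
  by exists (fun _ => 0), (fun _ => 0), (fun _ => 0) => x y xI; exfalso; apply: noI; exists x.
pose h x y := f x y - f x0 y.
have TP : forall x, x \in I -> forall y1 y2 y3, y1 \in J -> y2 \in J -> y3 \in J ->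
    y1 < y2 -> y2 < y3 ->
    (y3 - y1) * h x y2 = (y3 - y2) * h x y1 + (y2 - y1) * h x y3.
  move=> x xI y1 y2 y3 y1J y2J y3J h12 h23.
  case: (eqVneq x x0) => [->|ne]; first by rewrite /h !subrr; ring.
  by rewrite /h; apply: (three_point R I J f H) => //; apply/eqP.
case: (pselect (exists u v, [/\ u \in J, v \in J & u < v])) => [[u [v [uJ vJ uv]]]|noJ].
  pose k x := (h x v - h x u) / (v - u).
  exists (fun x => h x u - k x * u), k, (f x0) => x y xI yJ.
  have vu0 : v - u != 0 by rewrite subr_eq0 gt_eqF.
  suff e : h x y = h x u + k x * (y - u) by move: e; rewrite /h; lra.
  rewrite /k.
  have TPx := TP x xI.
  case: (ltgtP y u) => [yu|uy|->]; last by rewrite subrr mulr0 addr0.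
    have e := TPx _ _ _ yJ uJ vJ yu uv.
    have e' : (v - u) * h x y = (v - y) * h x u + (y - u) * h x v by lra.
    by rewrite -[h x y](mulKf vu0) e'; field.
  case: (ltgtP y v) => [yv|vy|->].
  - have e := TPx _ _ _ uJ yJ vJ uy yv.
    by rewrite -[h x y](mulKf vu0) e; field.
  - have e := TPx _ _ _ uJ vJ yJ uv vy.
    have e' : (v - u) * h x y = (y - u) * h x v - (y - v) * h x u by lra.
    by rewrite -[h x y](mulKf vu0) e'; field.
  - by field.
case: (pselect (exists y0, y0 \in J)) => [[y0 y0J]|noJ']; last first.
  by exists (fun _ => 0), (fun _ => 0), (fun _ => 0) => x y _ yJ; exfalso; apply: noJ'; exists y.
exists (fun x => h x y0), (fun _ => 0), (f x0) => x y xI yJ.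
case: (ltgtP y y0) => [yy|yy|->]; first (by exfalso; apply: noJ; exists y, y0);
  first (by exfalso; apply: noJ; exists y0, y).
by rewrite /h; ring.
Qed.
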